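(* Let $G=(V,E,\mathcal{P},s,t,c)$ be an update flow network with exactly two update flow pairs $\mathcal{P}=\{B,R\}$, $B=(B^o,B^u)$ of demand $d_B$ and $R=(R^o,R^u)$ of demand $d_R$, such that $B^o\cup B^u$ and $R^o\cup R^u$ are acyclic. If the dependency graph $D$ of $G$ contains a directed cycle, then there is no feasible update sequence for $G$.
   Context: A flow network is $G=(V,E,s,t,c)$ where $(V,E)$ is a directed graph, $s,t\in V$, and $c\colon E\to\mathbb{N}$ is a capacity function. An $(s,t)$-flow of demand $d\in\mathbb{N}$ is a directed path $F$ from $s$ to $t$ with $d\le c(e)$ for all $e\in E(F)$. An update flow pair $P=(F^o,F^u)$ consists of two $(s,t)$-flows, the old flow $F^o$ and the new flow $F^u$, both of the same demand $d_P$. An update flow network $G=(V,E,\mathcal{P},s,t,c)$ is a flow network together with a finite family $\mathcal{P}$ of update flow pairs whose old flows are jointly valid: $\sum_{P\in\mathcal{P}:\,e\in E(F^o_P)} d_P\le c(e)$ for every $e\in E$. An update is an element $(v,P)\in V\times\mathcal{P}$. For a set $U\subseteq V\times\mathcal{P}$ of updates and a pair $P=(F^o,F^u)$, an edge $(u,v)\in E(F^o)\cup E(F^u)$ is active for $P$ with respect to $U$ if either $(u,P)\notin U$ and $(u,v)\in E(F^o)$, or $(u,P)\in U$ and $(u,v)\in E(F^u)$; otherwise it is inactive. $P$ is transient for $U$ if the graph formed by the edges active for $P$ w.r.t. $U$ contains exactly one directed $s$–$t$ path $T_{P,U}$. The family $\mathcal{P}$ is a transient family for $U$ if every $P\in\mathcal{P}$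 is transient for $U$ and $\sum_{P\in\mathcal{P}:\,e\in E(T_{P,U})} d_P\le c(e)$ for every edge $e$. An update sequence is an ordered partition $\mathfrak{R}=(\mathfrak{r}_1,\dots,\mathfrak{r}_\ell)$ of $V\times\mathcal{P}$ into rounds; it is feasible if for every $i$ and every $S\subseteq\mathfrak{r}_i$, $\mathcal{P}$ is a transient family for $S\cup\mathfrak{r}_1\cup\dots\cup\mathfrak{r}_{i-1}$. Blocks: for a pair $P=(F^o,F^u)$ with $F^o\cup F^u$ acyclic, fix a topological order $\prec$ of $F^o\cup F^u$ and let $z_1\prec\dots\prec z_k$ be the vertices of $V(F^o)\cap V(F^u)$. For $j\in\{1,\dots,k-1\}$, the $j$-th block of $P$ (an $P$-block) is the subgraph of $F^o\cup F^u$ induced by $\{v: z_j\preceq v\preceq z_{j+1}\}$. Dependency graph: for $I,J\in\{B,R\}$ with $I\ne J$, an $I$-block $b_1$ depends on a $J$-block $b_2$ if there is an edge $e\in E(b_1)\cap E(I^u)\cap E(b_2)\cap E(J^o)$ with $c(e)<d_I+d_J$. The dependency graph $D$ of $G$ is the directed graph whose vertices are all blocks of $B$ and of $R$, with an arc from $b_1$ to $b_2$ whenever $b_1$ depends on $b_2$. *)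

(* Defs.v *)
From mathcomp Require Import all_boot.
Set Implicit Arguments. Unset Strict Implicit. Unset Printing Implicit Defensive.

Section UpdateFlows.
Variable V : finType.

Definition pedges (p : seq V) : seq (V * V) := zip p (behead p).

Definition stpath (A : rel V) (s t : V) (p : seq V) : bool :=
  if p is x :: q then [&& x == s, path A x q, last x q == t & uniq p]
  else false.

Variable E : {set V * V}.
Variables (s t : V) (c : V * V -> nat).

Definition Erel : rel V := fun u v => (u, v) \in E.

Definition stflow (d : nat) (F : seq V) : bool :=
  stpath Erel s t F && all (fun e => d <= c e) (pedges F).

Variable I : finType.
Variables (d : I -> nat) (Fo Fu : I -> seq V).

Definition update_flow_network : Prop :=
  (forall i, stflow (d i) (Fo i) /\ stflow (d i) (Fu i)) /\
  (forall e, e \in E -> \sum_(i | e \in pedges (Fo i)) d i <= c e).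

Definition active (U : {set V * I}) (i : I) : rel V := fun u v =>
  ((u, v) \in pedges (Fo i) ++ pedges (Fu i)) &&
  ((((u, i) \notin U) && ((u, v) \in pedges (Fo i))) ||
   (((u, i) \in U) && ((u, v) \in pedges (Fu i)))).

Definition transient (U : {set V * I}) (i : I) (T : seq V) : Prop :=
  stpath (active U i) s t T /\
  (forall p, stpath (active U i) s t p -> p = T).

Definition transient_family (U : {set V * I}) : Prop :=
  exists T : I -> seq V,
    (forall i, transient U i (T i)) /\
    (forall e, e \in E -> \sum_(i | e \in pedges (T i)) d i <= c e).

Definition update_sequence (rs : seq {set V * I}) : Prop :=
  all (fun r => r != set0) rs /\
  (forall i j, i < size rs -> j < size rs -> i != j ->
     [disjoint nth set0 rs i & nth set0 rs j]) /\
  \bigcup_(r <- rs) r = setT.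

Definition feasible_update_sequence (rs : seq {set V * I}) : Prop :=
  update_sequence rs /\
  forall k, k < size rs -> forall S : {set V * I}, S \subset nth set0 rs k ->
    transient_family (S :|: \bigcup_(j < k) nth set0 rs j).

Definition union_rel (i : I) : rel V := fun u v =>
  ((u, v) \in pedges (Fo i)) || ((u, v) \in pedges (Fu i)).

Definition acyclic_pair (i : I) : Prop :=
  ~ exists cy : seq V, [/\ cy != [::], uniq cy & cycle (union_rel i) cy].

Definition topo_order (i : I) (tord : seq V) : Prop :=
  [/\ uniq tord,
      (forall v, (v \in tord) = (v \in Fo i) || (v \in Fu i)) &
      (forall u v, union_rel i u v -> index u tord < index v tord)].

Definition common (i : I) (tord : seq V) : seq V :=
  [seq v <- tord | (v \in Fo i) && (v \in Fu i)].

(* blocks are indexed by (i, j) with j in 0..k-2 (j-th block is between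
   z_(j) and z_(j+1), 0-based) *)
Definition valid_block (tord : I -> seq V) (b : I * nat) : bool :=
  b.2.+1 < size (common b.1 (tord b.1)).

Definition in_block (tord : I -> seq V) (b : I * nat) (v : V) : bool :=
  let to := tord b.1 in
  let z := common b.1 to in
  [&& v \in to,
      index (nth v z b.2) to <= index v to &
      index v to <= index (nth v z b.2.+1) to].

Definition block_edge (tord : I -> seq V) (b : I * nat) (e : V * V) : bool :=
  [&& union_rel b.1 e.1 e.2, in_block tord b e.1 & in_block tord b e.2].

Definition depends (tord : I -> seq V) (b1 b2 : I * nat) : bool :=
  [&& b1.1 != b2.1, valid_block tord b1, valid_block tord b2 &
   [exists e : V * V,
      [&& block_edge tord b1 e, e \in pedges (Fu b1.1),
          block_edge tord b2 e, e \in pedges (Fo b2.1) &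
          c e < d b1.1 + d b2.1]]].

Definition dependency_has_cycle (tord : I -> seq V) : Prop :=
  exists cy : seq (I * nat),
    [/\ cy != [::], uniq cy, all (valid_block tord) cy & cycle (depends tord) cy].

End UpdateFlows.

(* Main.v *)
Require Import Defs.
From mathcomp Require Import all_boot.
Set Implicit Arguments. Unset Strict Implicit. Unset Printing Implicit Defensive.

Section Aux.
Variable V : finType.
Implicit Types (p q : seq V) (x y u v w z : V).

Lemma mem_pedges x0 p u v : (u, v) \in pedges p ->
  exists2 k, k.+1 < size p & (nth x0 p k = u /\ nth x0 p k.+1 = v).
Proof.
elim: p => [|a p IH] //.
case: p IH => [|b p] IH //.
rewrite /pedges /= in_cons => /orP [/eqP [<- <-]|H]; first by exists 0.
have [k Hk [H1 H2]] := IH H. by exists k.+1.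
Qed.

Lemma pedges_nth x0 p k : k.+1 < size p -> (nth x0 p k, nth x0 p k.+1) \in pedges p.
Proof.
elim: p k => [|a p IH] k //.
case: p IH => [|b p] IH // Hk.
case: k Hk => [|k] Hk; first by rewrite /pedges /= mem_head.
rewrite /pedges /= in_cons; apply/orP; right. exact: (IH k Hk).
Qed.

Lemma pedges_mem p u v : (u, v) \in pedges p -> (u \in p) && (v \in p).
Proof. move=> /(mem_pedges u) [k Hk [<- <-]]. rewrite !mem_nth //. exact: ltnW. Qed.

Lemma pedges_uniq p u v w : uniq p -> (u, v) \in pedges p -> (u, w) \in pedges p -> v = w.
Proof.
move=> Hu /(mem_pedges u) [k Hk [H1 H2]] /(mem_pedges u) [k' Hk' [H1' H2']].
have : k = k'.
  by apply/eqP; rewrite -(nth_uniq u (ltnW Hk) (ltnW Hk') Hu) H1 H1'.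
move=> ?; subst k'. by rewrite -H2 -H2'.
Qed.

Lemma path_succ (A : rel V) x q w : path A x q -> w \in x :: q -> w != last x q ->
  exists nx, ((w, nx) \in pedges (x :: q)) && A w nx.
Proof.
elim: q x => [|y q IH] x /=.
  by rewrite mem_seq1 => _ /eqP ->; rewrite eqxx.
move=> /andP [Hxy Hp]; rewrite in_cons => /orP [/eqP ->|Hw] Hl.
  by exists y; rewrite /pedges /= mem_head.
have [nx /andP [H1 H2]] := IH y Hp Hw Hl.
by exists nx; rewrite /pedges /= in_cons H2 andbT; apply/orP; right.
Qed.

Lemma sorted_edges (r : rel V) p : (forall u v, (u,v) \in pedges p -> r u v) -> sorted r p.
Proof.
case: p => [|a q] //=.
elim: q a => [|b q IH] a //= H.
apply/andP; split; first by apply: H; rewrite /pedges /= mem_head.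
apply: IH => u v Huv; apply: H; rewrite /pedges /= in_cons; apply/orP; right; exact: Huv.
Qed.

Definition ltr (tord : seq V) : rel V := fun a b => index a tord < index b tord.
Lemma ltr_trans tord : transitive (ltr tord).
Proof. move=> y x z; exact: ltn_trans. Qed.

Lemma mono tord p x y : sorted (ltr tord) p -> x \in p -> y \in p ->
  index x p < index y p -> ltr tord x y.
Proof.
move=> Hs Hx Hy Hi.
have := sorted_ltn_nth (@ltr_trans tord) x Hs (index x p) (index y p).
rewrite !inE !index_mem !nth_index //. by move=> /(_ Hx Hy Hi).
Qed.

Lemma mono_conv tord p x y : sorted (ltr tord) p -> x \in p -> y \in p ->
  ltr tord x y -> index x p < index y p.
Proof.
move=> Hs Hx Hy Hl. rewrite ltnNge leq_eqVlt; apply/negP => /orP [/eqP E | H].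
- have Exy : x = y by rewrite -(nth_index x Hx) -E nth_index.
  by subst; rewrite /ltr ltnn in Hl.
- have := mono Hs Hy Hx H. rewrite /ltr => H'. by have := ltn_trans Hl H'; rewrite ltnn.
Qed.

Lemma idx_eq (tord : seq V) a z : index a tord = index z tord -> z \in tord -> a = z.
Proof.
move=> E Hz. have Ha : a \in tord by rewrite -index_mem E index_mem.
by rewrite -(nth_index z Ha) E nth_index.
Qed.

Lemma jump tord H a b z : sorted (ltr tord) H -> z \in H -> (a,b) \in pedges H ->
  index a tord < index z tord -> index z tord <= index b tord -> b = z.
Proof.
move=> Hs Hz /(mem_pedges z) [k Hk [Ha Hb]] H1 H2.
have Hm : index z H < size H by rewrite index_mem.
have Hn := nth_index z Hz.
have hom := sorted_ltn_nth (@ltr_trans tord) z Hs.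
case: (ltngtP (index z H) k.+1) => Hc.
- exfalso. move: Hc; rewrite ltnS leq_eqVlt => /orP [/eqP Ek | Hlt].
  + by move: H1; rewrite -Ha -Ek Hn ltnn.
  + have := hom (index z H) k; rewrite !inE Hm (ltnW Hk) => /(_ isT isT Hlt).
    rewrite /ltr Hn Ha => H3. by have := ltn_trans H1 H3; rewrite ltnn.
- exfalso. have := hom k.+1 (index z H); rewrite !inE Hm Hk => /(_ isT isT Hc).
  rewrite /ltr Hn Hb => H3. by have := leq_trans H3 H2; rewrite ltnn.
- by rewrite -Hb -Hc Hn.
Qed.

Lemma crossing tord (A : rel V) F G z x q :
  sorted (ltr tord) F -> sorted (ltr tord) G -> z \in F -> z \in G -> z \in tord ->
  (forall a b, A a b -> ((a,b) \in pedges F) || ((a,b) \in pedges G)) ->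
  path A x q -> index x tord <= index z tord -> index z tord <= index (last x q) tord ->
  z \in x :: q.
Proof.
move=> HsF HsG HzF HzG Hzt HA.
elim: q x => [|y q IH] x /= Hpath Hxz Hzl.
- rewrite mem_seq1 eq_sym; apply/eqP. apply: (idx_eq (tord := tord)) => //. by apply/eqP; rewrite eqn_leq Hxz Hzl.
- move: Hpath => /andP [Axy Hp].
  case: (x =P z) => [->|Hne]; first by rewrite mem_head.
  have Hlt : index x tord < index z tord.
    rewrite ltn_neqAle Hxz andbT; apply/eqP => E; apply: Hne; exact: (idx_eq E Hzt).
  rewrite in_cons; apply/orP; right.
  case: (leqP (index z tord) (index y tord)) => Hzy.
  + move: (HA _ _ Axy) => /orP [HF'|HG'].
     * by rewrite (jump HsF HzF HF' Hlt Hzy) mem_head.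
     * by rewrite (jump HsG HzG HG' Hlt Hzy) mem_head.
  + apply: IH => //. exact: ltnW.
Qed.

Lemma stpathE (r : rel V) s t p : stpath r s t p ->
  exists q, [/\ p = s :: q, path r s q, last s q = t & uniq p].
Proof. case: p => [|x q] //= /and4P [/eqP -> Hp /eqP Hl Hu]. by exists q. Qed.

End Aux.

Section Key.
Variable V : finType.

Lemma key tord (r A : rel V) (F G T : seq V) (s t z u v : V) :
  stpath r s t F ->
  sorted (ltr tord) F -> sorted (ltr tord) G ->
  {subset F <= tord} ->
  z \in F -> z \in G ->
  (forall a b, A a b -> ((a,b) \in pedges F) || ((a,b) \in pedges G)) ->
  (forall x, A z x -> (z, x) \in pedges F) ->
  (forall w, w \in F -> w \in G -> index z tord < index w tord ->
     index w tord <= index u tord -> False) ->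
  (u, v) \in pedges F -> index z tord <= index u tord ->
  stpath A s t T -> (u, v) \in pedges T.
Proof.
move=> HF HsF HsG HFt HzF HzG HA HAz Hgap Huv Hzu HT.
have [qF [EF _ HlF HuF]] := stpathE HF.
have [qT [ET HpT HlT _]] := stpathE HT.
have HsinF : s \in F by rewrite EF mem_head.
have HtF : t \in F by rewrite EF -HlF mem_last.
have HidxsF : index s F = 0 by rewrite EF /= eqxx.
have HidxtF : index t F = size qF by rewrite EF -HlF index_last // -EF.
have HsizeF : size F = (size qF).+1 by rewrite EF.
have Hsz : index s tord <= index z tord.
  case: (z =P s) => [->//|Hne]. apply: ltnW. apply: (mono HsF) => //.
  rewrite HidxsF lt0n; apply/eqP => E0; apply: Hne.
  by rewrite -(nth_index s HzF) E0 EF.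
have Hzt : index z tord <= index t tord.
  case: (z =P t) => [->//|Hne]. apply: ltnW. apply: (mono HsF) => //.
  rewrite HidxtF. have : index z F < size F by rewrite index_mem.
  rewrite HsizeF ltnS leq_eqVlt => /orP [/eqP E0|//]. exfalso; apply: Hne.
  by rewrite -(nth_index s HzF) -(nth_index s HtF) E0 HidxtF.
have /andP [HuF' HvF'] := pedges_mem Huv.
have Hpzu : index z F <= index u F.
  rewrite leqNgt; apply/negP => H. have := mono HsF HuF' HzF H.
  by rewrite /ltr ltnNge Hzu.
have [k Hk [Hku Hkv]] := mem_pedges s Huv.
have Ek : k = index u F by rewrite -Hku index_uniq // ltnW.
subst k.
set pz := index z F in Hpzu *. set pu := index u F in Hk Hku Hkv Hpzu *.
have Hstep : forall l, pz <= l <= pu -> nth s F l \in T ->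
    (nth s F l, nth s F l.+1) \in pedges T.
  move=> l /andP [H1 H2] HwT.
  have Hl1 : l.+1 < size F by apply: leq_ltn_trans Hk.
  have Hwt : nth s F l != t.
    have Et : nth s F (size qF) = t.
      by rewrite -HlF -[size qF]/((size qF).+1.-1) -HsizeF nth_last EF.
    rewrite -Et nth_uniq //.
    + by rewrite neq_ltn; apply/orP; left; rewrite -ltnS -HsizeF.
    + exact: ltnW.
    + by rewrite HsizeF.
  have HwF : nth s F l \in F by rewrite mem_nth // ltnW.
  rewrite ET in HwT.
  have Hwl : nth s F l != last s qT by rewrite HlT.
  have [nx /andP [Hnx Anx]] := path_succ HpT HwT Hwl.
  rewrite -ET in Hnx.
  have HnxF : (nth s F l, nx) \in pedges F.
    case: (l =P pz) => [El|Hne].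
      by rewrite El nth_index // in Anx *; apply: HAz.
    have Hlt : pz < l by rewrite ltn_neqAle H1 andbT eq_sym; apply/eqP.
    move: (HA _ _ Anx) => /orP [//|HG'].
    exfalso. have /andP [HwG _] := pedges_mem HG'.
    apply: (Hgap _ HwF HwG).
    + have := mono HsF HzF HwF. rewrite index_uniq //; first by move=> /(_ Hlt).
      exact: ltnW.
    + move: H2; rewrite leq_eqVlt => /orP [/eqP ->|H2]; first by rewrite nth_index.
      apply: ltnW. have := mono HsF HwF HuF'. rewrite index_uniq //; first by move=> /(_ H2).
      exact: ltnW.
  by rewrite -(pedges_uniq HuF HnxF (pedges_nth s Hl1)).
have Hmem : forall n, pz + n <= pu -> nth s F (pz + n) \in T.
  elim=> [|n IH] Hn.
  - rewrite addn0 nth_index // ET.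
    apply: (crossing HsF HsG HzF HzG (HFt _ HzF) HA HpT) => //. by rewrite HlT.
  - have Hn' : pz + n <= pu by apply: leq_trans Hn; rewrite leq_add2l.
    have := Hstep (pz + n) _ (IH Hn'). rewrite leq_addr Hn' => /(_ isT).
    by move=> /pedges_mem /andP [_]; rewrite addnS.
have := Hstep pu. rewrite Hpzu leqnn => /(_ isT).
rewrite Hku Hkv; apply.
have := Hmem (pu - pz); rewrite subnKC // => /(_ (leqnn pu)); rewrite Hku; exact.
Qed.
End Key.

Lemma gap (V : finType) (tord : seq V) (P : pred V) j (w : V) x0 :
  uniq tord -> j.+1 < size [seq v <- tord | P v] -> P w -> w \in tord ->
  index (nth x0 [seq v <- tord | P v] j) tord < index w tord ->
  index w tord < index (nth x0 [seq v <- tord | P v] j.+1) tord -> False.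
Proof.
move=> Hu Hj Pw Hw H1 H2.
set zs := [seq v <- tord | P v] in Hj H1 H2.
have Hso : sorted (ltr tord) tord.
  apply: sorted_edges => a b /(mem_pedges a) [k Hk [<- <-]].
  by rewrite /ltr !index_uniq // ltnW.
have Hzs : sorted (ltr tord) zs := sorted_filter (@ltr_trans V tord) P Hso.
have Hzu : uniq zs := filter_uniq P Hu.
have Hwz : w \in zs by rewrite mem_filter Pw.
have Hj0 : j < size zs := ltnW Hj.
have := mono_conv Hzs (mem_nth x0 Hj0) Hwz H1.
have := mono_conv Hzs Hwz (mem_nth x0 Hj) H2.
rewrite !index_uniq // ltnS => A B. by have := leq_ltn_trans A B; rewrite ltnn.
Qed.

Lemma bigcup_has (T : finType) (x : T) (rs : seq {set T}) :
  x \in \bigcup_(r <- rs) r -> has (fun r : {set T} => x \in r) rs.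
Proof.
elim: rs => [|r rs IH]; first by rewrite big_nil in_set0.
by rewrite big_cons in_setU /= => /orP [->//|/IH ->]; rewrite orbT.
Qed.

Lemma path_dec (T : Type) (f : T -> nat) x p :
  path (fun a b => f b < f a) x p -> f (last x p) <= f x.
Proof.
elim: p x => [|y p IH] x //= /andP [H1 H2].
exact: leq_trans (IH _ H2) (ltnW H1).
Qed.

Lemma path_pedges (V : finType) (A : rel V) x q u v :
  path A x q -> (u, v) \in pedges (x :: q) -> A u v.
Proof.
elim: q x => [|y q IH] x //=.
move=> /andP [Hxy Hp]. rewrite /pedges /= in_cons => /orP [/eqP [-> ->] //| H].
exact: (IH y Hp H).
Qed.

Lemma block_facts (V : finType) (Fo Fu tord : bool -> seq V) s i j u v :
  topo_order Fo Fu i (tord i) -> valid_block Fo Fu tord (i,j) ->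
  block_edge Fo Fu tord (i,j) (u,v) ->
  [/\ index (nth s (common Fo Fu i (tord i)) j) (tord i) <= index u (tord i),
      index u (tord i) < index v (tord i) &
      index v (tord i) <= index (nth s (common Fo Fu i (tord i)) j.+1) (tord i)].
Proof.
move=> [_ _ Hord] Hv /and3P [/= Huv /and3P [_ Hu1 _] /and3P [_ _ Hv2]].
rewrite /valid_block /= in Hv.
split.
- by rewrite (set_nth_default u) // ltnW.
- exact: Hord.
- by rewrite (set_nth_default v).
Qed.

Theorem mainTheorem4 (V : finType) (E : {set V * V}) (s t : V)
  (c : V * V -> nat) (d : bool -> nat) (Fo Fu : bool -> seq V)
  (tord : bool -> seq V) :
  update_flow_network E s t c d Fo Fu ->
  (forall i, acyclic_pair Fo Fu i) ->
  (forall i, topo_order Fo Fu i (tord i)) ->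
  dependency_has_cycle c d Fo Fu tord ->
  ~ exists rs : seq {set V * bool}, feasible_update_sequence E s t c d Fo Fu rs.
Proof.
move=> [Hflow Hcap] _ Htopo [cy [Hne _ _ Hcyc]] [rs [[_ [Hdisj Hcover]] Hfeas]].
pose zof (b : bool * nat) := nth s (common Fo Fu b.1 (tord b.1)) b.2.
pose rnd (b : bool * nat) := find (fun r : {set V * bool} => (zof b, b.1) \in r) rs.
have Hrnd : forall b, rnd b < size rs /\ (zof b, b.1) \in nth set0 rs (rnd b).
  move=> b. have Hh : has (fun r : {set V * bool} => (zof b, b.1) \in r) rs.
    by apply: bigcup_has; rewrite Hcover in_setT.
  by split; [rewrite -has_find | exact: (nth_find set0 Hh)].
have Hdep : forall b1 b2, depends c d Fo Fu tord b1 b2 -> rnd b2 < rnd b1.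
  move=> [i1 j1] [i2 j2] /and4P [/= Hi12 Hv1 Hv2 /existsP [[u v] /and5P [Hb1 Hu1 Hb2 Ho2 Hc]]].
  rewrite ltnNge; apply/negP => Hle.
  have [Hr1 Hm1] := Hrnd (i1,j1). have [Hr2 Hm2] := Hrnd (i2,j2).
  move: Hle Hr2 Hm2 Hm1 Hr1.
  set k := rnd (i2, j2). set k1 := rnd (i1, j1).
  set z1 := zof (i1,j1). set z2 := zof (i2, j2). move=> /= Hle Hr2 Hm2 Hm1 Hr1.
  pose S := nth set0 rs k :&: [set (z1, i1)].
  have HS : S \subset nth set0 rs k by apply: subsetIl.
  have [T [HT Hcap']] := Hfeas k Hr2 S HS.
  set U := S :|: _ in HT Hcap'.
  have HU1 : (z1, i1) \in U.
    rewrite in_setU; move: Hle; rewrite leq_eqVlt => /orP [/eqP Ek|Hlt].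
      by rewrite /S in_setI in_set1 eqxx andbT -Ek Hm1.
    apply/orP; right; apply/bigcupP; by exists (Ordinal Hlt).
  have HU2 : (z2, i2) \notin U.
    rewrite in_setU negb_or; apply/andP; split.
      rewrite /S in_setI in_set1 negb_and; apply/orP; right.
      by apply/negP => /eqP [_ Ei]; rewrite Ei eqxx in Hi12.
    apply/negP => /bigcupP [[j Hj] _ /= Hmj].
    have := Hdisj j k (ltn_trans Hj Hr2) Hr2 (negbT (ltn_eqF Hj)).
    by move=> /disjointFr /(_ Hmj); rewrite Hm2.
  have HflE : forall i, stpath (Erel E) s t (Fo i) /\ stpath (Erel E) s t (Fu i).
    by move=> i; have [/andP [H1 _] /andP [H2 _]] := Hflow i.
  have [Hz1a Hz1b Hz1c] := block_facts s (Htopo i1) Hv1 Hb1.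
  have [Hz2a Hz2b Hz2c] := block_facts s (Htopo i2) Hv2 Hb2.
  have He1 : (u,v) \in pedges (T i1).
    have [Htu Hmt Hord] := Htopo i1.
    have Hz1 : z1 \in common Fo Fu i1 (tord i1) by apply: mem_nth; exact: ltnW.
    move: Hz1; rewrite mem_filter => /andP [/andP [HzO HzU] _].
    apply: (key (tord := tord i1) (r := Erel E) (A := active Fo Fu U i1)
              (G := Fo i1) (z := z1) (HflE i1).2).
    + by apply: sorted_edges => a b Hab; apply: Hord; rewrite /union_rel Hab orbT.
    + by apply: sorted_edges => a b Hab; apply: Hord; rewrite /union_rel Hab.
    + by move=> w Hw; rewrite Hmt Hw orbT.
    + exact: HzU.
    + exact: HzO.
    + by move=> a b /andP [H _]; move: H; rewrite mem_cat orbC.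
    + move=> x0 /andP [_ /orP [/andP [H _]|/andP [_ H]]] //.
      by rewrite HU1 in H.
    + move=> w HwF HwG H1 H2.
      apply: (gap (P := fun v => (v \in Fo i1) && (v \in Fu i1)) (j := j1) (w := w)
              (x0 := s) Htu Hv1 _ _ H1).
      * by rewrite HwF HwG.
      * by rewrite Hmt HwF orbT.
      * exact: leq_ltn_trans H2 (leq_trans Hz1b Hz1c).
    + exact: Hu1.
    + exact: Hz1a.
    + exact: (HT i1).1.
  have He2 : (u,v) \in pedges (T i2).
    have [Htu Hmt Hord] := Htopo i2.
    have Hz2 : z2 \in common Fo Fu i2 (tord i2) by apply: mem_nth; exact: ltnW.
    move: Hz2; rewrite mem_filter => /andP [/andP [HzO HzU] _].
    apply: (key (tord := tord i2) (r := Erel E) (A := active Fo Fu U i2)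
              (G := Fu i2) (z := z2) (HflE i2).1).
    + by apply: sorted_edges => a b Hab; apply: Hord; rewrite /union_rel Hab.
    + by apply: sorted_edges => a b Hab; apply: Hord; rewrite /union_rel Hab orbT.
    + by move=> w Hw; rewrite Hmt Hw.
    + exact: HzO.
    + exact: HzU.
    + by move=> a b /andP [H _]; move: H; rewrite mem_cat.
    + move=> x0 /andP [_ /orP [/andP [_ H]|/andP [H _]]] //.
      by rewrite H in HU2.
    + move=> w HwF HwG H1 H2.
      apply: (gap (P := fun v => (v \in Fo i2) && (v \in Fu i2)) (j := j2) (w := w)
              (x0 := s) Htu Hv2 _ _ H1).
      * by rewrite HwF HwG.
      * by rewrite Hmt HwF.
      * exact: leq_ltn_trans H2 (leq_trans Hz2b Hz2c).
    + exact: Ho2.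
    + exact: Hz2a.
    + exact: (HT i2).1.
  have HE : (u, v) \in E.
    have [q0 [Eq0 Hp0 _ _]] := stpathE (HflE i1).2.
    rewrite Eq0 in Hu1. exact: (path_pedges Hp0 Hu1).
  have := Hcap' _ HE. rewrite big_mkcond big_bool /=.
  clear -Hi12 He1 He2 Hc. move: Hi12 He1 He2 Hc; case: i1; case: i2 => //= _ -> -> Hc H.
  - by have := leq_ltn_trans H Hc; rewrite ltnn.
  - by have := leq_ltn_trans H Hc; rewrite addnC ltnn.
case: cy Hne Hcyc => [|x q] // _ Hcyc.
have Hp : path (fun a b => rnd b < rnd a) x (rcons q x).
  by apply: sub_path Hcyc => a b; exact: Hdep.
move: Hp. case Eq: (rcons q x) => [|y p]; first by have := size_rcons q x; rewrite Eq.
move=> /= /andP [H1 H2].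
have := path_dec H2. rewrite -[last y p]/(last x (y :: p)) -Eq last_rcons => H3.
by have := leq_ltn_trans H3 H1; rewrite ltnn.
Qed.
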